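(* Let $r=\max\{\eta_a,\eta_b\}$, $\alpha=\max\{\sigma_{\max}(U):U\in B(V_*,r)\}$, $L=6\alpha^2\max\{|\lambda_1|,|\lambda_{\max}|\}$. Let $\eta_1\in(0,\min\{1,\eta_a,\eta_b\})$, $\eta_2\in(0,\eta_1)$ and $0<\delta_b\leqslant\min\left\{\frac{\eta_1-\eta_2}{L\max\{\eta_a,\eta_b\}+|\lambda_1|\alpha(\alpha+1)\eta_2},\delta^*\right\}$. Then $$g\big(B([V_*],\eta_2)\times[0,\delta_b]\big)\subset B([V_*],\eta_1).$$
   Context: Let $\mathcal{V}^{N_g}$ be a real Hilbert space of finite dimension $N_g$ with inner product $(\cdot,\cdot)$, and let $H:\mathcal{V}^{N_g}\to\mathcal{V}^{N_g}$ be a self-adjoint linear operator with eigenvalues $\lambda_1\leqslant\cdots\leqslant\lambda_{N_g}$, $\lambda_{\max}=\lambda_{N_g}$, $\lambda_1<0$. Fix $N<N_g$ with $\lambda_N<\lambda_{N+1}$. Elements of $(\mathcal{V}^{N_g})^N$ are written $U=(u_1,\dots,u_N)$; $U^\top V=((u_i,v_j))_{i,j=1}^N$; for a real $N\times N$ matrix $A=(a_{kj})$, $UA$ has $j$-th component $\sum_k a_{kj}u_k$; $HU=(Hu_1,\dots,Hu_N)$; $\|U\|=\operatorname{tr}(U^\top U)^{1/2}$; $\sigma_{\max}(U)=\sqrt{\lambda_{\max}(U^\top U)}$. Set $\nabla E(U)=HU$. For $U$, $\mathcal{A}_U=\nabla E(U)U^\top-U\nabla E(U)^\top$ is the linear operator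 on $\mathcal{V}^{N_g}$ given by $\mathcal{A}_Uw=\sum_{i=1}^N\big(Hu_i\,(u_i,w)-u_i\,(Hu_i,w)\big)$, applied componentwise. Let $V_*$ satisfy $V_*^\top V_*=I_N$, $HV_*=V_*\operatorname{diag}(\lambda_1,\dots,\lambda_N)$. $\mathcal{O}^N$ denotes the $N\times N$ orthogonal matrices, $\operatorname{dist}([U],[V_*])=\inf_{Q\in\mathcal{O}^N}\|UQ-V_*\|$, $B(U,\eta)=\{W:\|W-U\|\leqslant\eta\}$, $B([V_*],\eta)=\{W:\operatorname{dist}([W],[V_*])\leqslant\eta\}$. Fix constants $\eta_a,\eta_b,\delta^*>0$ such that (as asserted in the paper) there is a unique function $\hat g:B(V_*,\eta_a)\times[0,\delta^*]\to B(V_*,\eta_b)$ with $\hat g(U,s)-U=-s\,\mathcal{A}_{\frac{\hat g(U,s)+U}{2}}\frac{\hat g(U,s)+U}{2}$, and a unique function $g:B([V_*],\eta_a)\times[0,\delta^*]\to B([V_*],\eta_b)$ with $g(U,s)=\hat g(U,s)-s\nabla E(\hat g(U,s))(I_N-\hat g(U,s)^\top\hat g(U,s))$, defined on $B(V_*,\eta_a)$ by this formula and extended to $B([V_*],\eta_a)$ by orthogonal invariance $g(UQ,s)=g(U,s)Q$ for $Q\in\mathcal{O}^N$. *)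

(* Defs.v *)
(* The N_g-dimensional real Hilbert space is
   modelled as column vectors 'cV[R]_ng with the standard inner product;
   an N-tuple U = (u_1,...,u_N) is an ng x n matrix whose columns are the u_i. *)
From HB Require Import structures.
From mathcomp Require Import all_boot all_order all_algebra.
From mathcomp Require Import classical_sets reals.
Set Implicit Arguments. Unset Strict Implicit. Unset Printing Implicit Defensive.
Import Order.TTheory GRing.Theory Num.Theory.
Local Open Scope ring_scope.
Local Open Scope classical_set_scope.

Definition fnorm {R : realType} {m n : nat} (U : 'M[R]_(m, n)) : R :=
  Num.sqrt (\tr (U^T *m U)).

Definition lambda_max {R : realType} {n : nat} (A : 'M[R]_n) : R :=
  sup [set a : R | eigenvalue A a].

Definition sigma_max {R : realType} {m n : nat} (U : 'M[R]_(m, n)) : R :=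
  Num.sqrt (lambda_max (U^T *m U)).

Definition orthogonal_mx {R : realType} {n : nat} (Q : 'M[R]_n) : Prop :=
  Q^T *m Q = 1%:M.

Definition dist_orb {R : realType} {m n : nat} (U V : 'M[R]_(m, n)) : R :=
  inf [set fnorm (U *m Q - V) | Q in [set Q : 'M[R]_n | orthogonal_mx Q]].

Definition Aop {R : realType} {m n : nat} (H : 'M[R]_m) (U W : 'M[R]_(m, n))
  : 'M[R]_(m, n) :=
  (H *m U) *m (U^T *m W) - U *m ((H *m U)^T *m W).

(* Main.v *)
Require Import Defs.
From HB Require Import structures.
From mathcomp Require Import all_boot all_order all_algebra.
From mathcomp Require Import classical_sets reals.
From mathcomp Require Import boolp ring lra.
Import Order.TTheory GRing.Theory Num.Theory.
Local Open Scope ring_scope.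
Set Implicit Arguments. Unset Strict Implicit.

Section Norms.
Variable R : realType.

Lemma CS (I : finType) (a b : I -> R) :
  (\sum_i a i * b i) ^+ 2 <= (\sum_i a i ^+ 2) * (\sum_i b i ^+ 2).
Proof.
set A := \sum_i a i ^+ 2; set B := \sum_i b i ^+ 2; set C := \sum_i a i * b i.
have A0 : 0 <= A by apply: sumr_ge0 => i _; exact: sqr_ge0.
have B0 : 0 <= B by apply: sumr_ge0 => i _; exact: sqr_ge0.
have key : 0 <= \sum_i (A * b i - C * a i) ^+ 2 by apply: sumr_ge0 => i _; exact: sqr_ge0.
have E : \sum_i (A * b i - C * a i) ^+ 2 = A * (A * B - C ^+ 2).
  have -> : \sum_i (A * b i - C * a i) ^+ 2
     = \sum_i (A ^+ 2 * b i ^+ 2 - (2 * A * C) * (a i * b i) + C ^+ 2 * a i ^+ 2).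
    by apply: eq_bigr => i _; ring.
  rewrite big_split /= sumrB -!mulr_sumr -/A -/B -/C; ring.
rewrite E in key.
have [A00|Apos] := eqVneq A 0.
  have a0 : forall i, a i = 0.
    move=> i; apply/eqP; rewrite -sqrf_eq0; apply/eqP.
    move/eqP: A00; rewrite psumr_eq0 => [/allP H|j _]; last exact: sqr_ge0.
    by apply/eqP; apply: H; rewrite mem_index_enum.
  rewrite /C big1 ?expr0n ?A00 ?mul0r //= => i _; by rewrite a0 mul0r.
have Ap : 0 < A by rewrite lt_def Apos A0.
rewrite pmulr_rge0 // subr_ge0 in key.
by [].

Qed.


Definition n2 {m k} (X : 'M[R]_(m,k)) := \sum_i \sum_j X i j ^+ 2.

Lemma tr_n2 m k (X : 'M[R]_(m,k)) : \tr (X^T *m X) = n2 X.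
Proof.
rewrite /mxtrace /n2; under eq_bigr do rewrite mxE.
rewrite exchange_big; apply: eq_bigr => i _; apply: eq_bigr => j _.
by rewrite mxE expr2.
Qed.

Lemma n2_ge0 m k (X : 'M[R]_(m,k)) : 0 <= n2 X.
Proof. by apply: sumr_ge0 => i _; apply: sumr_ge0 => j _; exact: sqr_ge0. Qed.

Lemma fnormE m k (X : 'M[R]_(m,k)) : fnorm X = Num.sqrt (n2 X).
Proof. by rewrite /fnorm tr_n2. Qed.

Lemma fnorm_ge0 m k (X : 'M[R]_(m,k)) : 0 <= fnorm X.
Proof. by rewrite fnormE sqrtr_ge0. Qed.

Lemma fnorm_sq m k (X : 'M[R]_(m,k)) : fnorm X ^+ 2 = n2 X.
Proof. by rewrite fnormE sqr_sqrtr // n2_ge0. Qed.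

Lemma n2_pair m k (X : 'M[R]_(m,k)) :
  n2 X = \sum_(p : 'I_m * 'I_k) X p.1 p.2 ^+ 2.
Proof. by rewrite /n2 pair_bigA. Qed.

Lemma le_sq_nneg (a b : R) : 0 <= b -> a ^+ 2 <= b ^+ 2 -> a <= b.
Proof. move=> b0 h; nra. Qed.

Lemma fnorm_le_from_n2 m k p q (Y : 'M[R]_(m,k)) (X : 'M[R]_(p,q)) c :
  0 <= c -> n2 Y <= c ^+ 2 * n2 X -> fnorm Y <= c * fnorm X.
Proof.
move=> c0 h; apply: le_sq_nneg; first by rewrite mulr_ge0 // fnorm_ge0.
by rewrite exprMn !fnorm_sq.
Qed.

Lemma fnormD m k (X Y : 'M[R]_(m,k)) : fnorm (X + Y) <= fnorm X + fnorm Y.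
Proof.
apply: le_sq_nneg; first by rewrite addr_ge0 // fnorm_ge0.
have cs := CS (fun p : 'I_m * 'I_k => X p.1 p.2) (fun p => Y p.1 p.2).
rewrite -!n2_pair -!fnorm_sq in cs.
set d := \sum_p _ in cs.
have hd : d <= fnorm X * fnorm Y.
  apply: le_sq_nneg; first by rewrite mulr_ge0 // fnorm_ge0.
  by rewrite exprMn.
have -> : fnorm (X + Y) ^+ 2 = fnorm X ^+ 2 + 2 * d + fnorm Y ^+ 2.
  rewrite !fnorm_sq !n2_pair /d mulr_sumr -!big_split /=.
  by apply: eq_bigr => p _; rewrite !mxE; ring.
have := fnorm_ge0 X; have := fnorm_ge0 Y; nra.
Qed.

Lemma n2_tr m k (X : 'M[R]_(m,k)) : n2 X^T = n2 X.
Proof. by rewrite /n2 exchange_big; apply: eq_bigr => i _; apply: eq_bigr => j _; rewrite mxE. Qed.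

Lemma fnorm_tr m k (X : 'M[R]_(m,k)) : fnorm X^T = fnorm X.
Proof. by rewrite !fnormE n2_tr. Qed.

Lemma n2Z m k (c : R) (X : 'M[R]_(m,k)) : n2 (c *: X) = c ^+ 2 * n2 X.
Proof.
rewrite /n2 mulr_sumr; apply: eq_bigr => i _; rewrite mulr_sumr.
by apply: eq_bigr => j _; rewrite mxE exprMn.
Qed.

Lemma fnormZ m k (c : R) (X : 'M[R]_(m,k)) : fnorm (c *: X) = `|c| * fnorm X.
Proof. by rewrite !fnormE n2Z sqrtrM ?sqr_ge0 // sqrtr_sqr. Qed.

Lemma fnormN m k (X : 'M[R]_(m,k)) : fnorm (- X) = fnorm X.
Proof. by rewrite -scaleN1r fnormZ normrN normr1 mul1r. Qed.

Lemma fnormB m k (X Y : 'M[R]_(m,k)) : fnorm (X - Y) <= fnorm X + fnorm Y.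
Proof. by rewrite -(fnormN Y) fnormD. Qed.

Lemma fnormM m k p (X : 'M[R]_(m,k)) (Y : 'M[R]_(k,p)) :
  fnorm (X *m Y) <= fnorm X * fnorm Y.
Proof.
rewrite !fnormE -sqrtrM ?n2_ge0 //; apply: ler_wsqrtr.
rewrite /n2 [X in _ <= _ * X]exchange_big mulr_suml.
apply: ler_sum => i _; rewrite mulr_sumr; apply: ler_sum => j _.
rewrite mxE; exact: CS.
Qed.


Lemma n2_isoV m k p (V : 'M[R]_(m,k)) (X : 'M[R]_(k,p)) :
  V^T *m V = 1%:M -> n2 (V *m X) = n2 X.
Proof.
move=> hV; rewrite -!tr_n2 trmx_mul -mulmxA (mulmxA V^T) hV mul1mx //.
Qed.

Lemma fnorm_isoV m k p (V : 'M[R]_(m,k)) (X : 'M[R]_(k,p)) :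
  V^T *m V = 1%:M -> fnorm (V *m X) = fnorm X.
Proof. by move=> hV; rewrite !fnormE n2_isoV. Qed.

Lemma n2_isoVt m k p (V : 'M[R]_(m,k)) (X : 'M[R]_(m,p)) :
  V^T *m V = 1%:M -> n2 (V^T *m X) <= n2 X.
Proof.
move=> hV; set P := 1%:M - V *m V^T.
have PT : P^T = P by rewrite /P linearB /= trmx1 trmx_mul trmxK.
have PP : P *m P = P.
  rewrite /P mulmxBl mul1mx mulmxBr mulmx1 -!mulmxA (mulmxA V^T) hV mul1mx.
  by rewrite subrr subr0.
have E : n2 X = n2 (V^T *m X) + n2 (P *m X).
  rewrite -!tr_n2 !trmx_mul PT trmxK.
  have -> : X^T *m P *m (P *m X) = X^T *m P *m X by rewrite -mulmxA (mulmxA P) PP mulmxA.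
  rewrite /P mulmxBr mulmx1 mulmxBl linearB /= !mulmxA.
  by rewrite addrC subrK.
by rewrite E lerDl n2_ge0.
Qed.

Lemma fnorm_isoVt m k p (V : 'M[R]_(m,k)) (X : 'M[R]_(m,p)) :
  V^T *m V = 1%:M -> fnorm (V^T *m X) <= fnorm X.
Proof. by move=> hV; rewrite !fnormE ler_wsqrtr // n2_isoVt. Qed.

Lemma fnorm_isoVr m k p (V : 'M[R]_(m,k)) (X : 'M[R]_(p,m)) :
  V^T *m V = 1%:M -> fnorm (X *m V) <= fnorm X.
Proof.
by move=> hV; rewrite -fnorm_tr trmx_mul -(fnorm_tr X) fnorm_isoVt.
Qed.

Lemma n2_diagl k p (d : 'rV[R]_k) (X : 'M[R]_(k,p)) h :
  (forall i, d 0 i ^+ 2 <= h ^+ 2) -> n2 (diag_mx d *m X) <= h ^+ 2 * n2 X.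
Proof.
move=> hd; rewrite /n2 mulr_sumr; apply: ler_sum => i _.
rewrite mulr_sumr; apply: ler_sum => j _.
by rewrite mul_diag_mx mxE exprMn ler_wpM2r ?sqr_ge0.
Qed.

Lemma n2_diagr k p (d : 'rV[R]_k) (X : 'M[R]_(p,k)) h :
  (forall i, d 0 i ^+ 2 <= h ^+ 2) -> n2 (X *m diag_mx d) <= h ^+ 2 * n2 X.
Proof.
move=> hd; rewrite /n2 mulr_sumr; apply: ler_sum => i _.
rewrite mulr_sumr; apply: ler_sum => j _.
by rewrite mul_mx_diag mxE exprMn mulrC ler_wpM2r ?sqr_ge0.
Qed.

Lemma fnorm_diagl k p (d : 'rV[R]_k) (X : 'M[R]_(k,p)) h : 0 <= h ->
  (forall i, d 0 i ^+ 2 <= h ^+ 2) -> fnorm (diag_mx d *m X) <= h * fnorm X.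
Proof. by move=> h0 hd; apply: fnorm_le_from_n2 => //; apply: n2_diagl. Qed.

Lemma fnorm_diagr k p (d : 'rV[R]_k) (X : 'M[R]_(p,k)) h : 0 <= h ->
  (forall i, d 0 i ^+ 2 <= h ^+ 2) -> fnorm (X *m diag_mx d) <= h * fnorm X.
Proof. by move=> h0 hd; apply: fnorm_le_from_n2 => //; apply: n2_diagr. Qed.

Lemma fnorm_H m p (H P : 'M[R]_m) (d : 'rV[R]_m) (X : 'M[R]_(m,p)) h : 0 <= h ->
  P^T *m P = 1%:M -> H *m P = P *m diag_mx d ->
  (forall i, d 0 i ^+ 2 <= h ^+ 2) -> fnorm (H *m X) <= h * fnorm X.
Proof.
move=> h0 hP hHP hd.
have PPt : P *m P^T = 1%:M by apply: mulmx1C.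
have -> : H *m X = P *m (diag_mx d *m (P^T *m X)).
  by rewrite !mulmxA -hHP -(mulmxA H) PPt mulmx1.
rewrite fnorm_isoV //; apply: le_trans (fnorm_diagl _ h0 hd) _.
by rewrite ler_wpM2l // fnorm_isoV ?trmxK.
Qed.

End Norms.

Lemma trD (R : realType) m k (A B : 'M[R]_(m,k)) : (A + B)^T = A^T + B^T.
Proof. by apply/matrixP => i j; rewrite !mxE. Qed.
Lemma trN (R : realType) m k (A : 'M[R]_(m,k)) : (- A)^T = - A^T.
Proof. by apply/matrixP => i j; rewrite !mxE. Qed.
Lemma trB (R : realType) m k (A B : 'M[R]_(m,k)) : (A - B)^T = A^T - B^T.
Proof. by rewrite trD trN. Qed.
Lemma trZ (R : realType) m k (c : R) (A : 'M[R]_(m,k)) : (c *: A)^T = c *: A^T.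
Proof. by apply/matrixP => i j; rewrite !mxE. Qed.

Ltac cancel_pos x := do ?rewrite (addrAC _ _ (- x)); rewrite ?subrr ?add0r ?addrN ?add0r.
Ltac cancel_neg x := do ?rewrite (addrAC _ _ x); rewrite ?addNr ?add0r.

Section Core.
Variables (R : realType) (ng n : nat) (H : 'M[R]_ng) (V : 'M[R]_(ng,n)) (dl : 'rV[R]_n) (h : R).
Hypotheses (hV : V^T *m V = 1%:M) (hHV : H *m V = V *m diag_mx dl) (hHt : H^T = H) (h0 : 0 <= h)
 (hH : forall p (X : 'M[R]_(ng,p)), fnorm (H *m X) <= h * fnorm X)
 (hd : forall i, dl 0 i ^+ 2 <= h ^+ 2).

Local Notation Lam := (diag_mx dl).

Lemma S_eq (X : 'M[R]_(ng,n)) :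
  (V + X)^T *m (V + X) - 1%:M = V^T *m X + X^T *m V + X^T *m X.
Proof.
rewrite trD mulmxDl !mulmxDr hV.
apply/eqP; rewrite -subr_eq0 !opprD !addrA.
cancel_pos (1%:M : 'M[R]_n). cancel_pos (V^T *m X). cancel_pos (X^T *m V).
by rewrite ?subrr.
Qed.

Lemma S_bound (X : 'M[R]_(ng,n)) :
  fnorm ((V + X)^T *m (V + X) - 1%:M) <= 2 * fnorm X + fnorm X ^+ 2.
Proof.
rewrite S_eq; apply: le_trans (fnormD _ _) _; apply: lerD; last first.
  by rewrite expr2 -{1}(fnorm_tr X) fnormM.
apply: le_trans (fnormD _ _) _; rewrite mulr2n mulrDl mul1r; apply: lerD.
  exact: fnorm_isoVt.
by rewrite -(fnorm_tr X) fnorm_isoVr.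
Qed.

Lemma VtH : V^T *m H = Lam *m V^T.
Proof. by rewrite -{1}hHt -trmx_mul hHV trmx_mul tr_diag_mx. Qed.

Lemma T_eq (F : 'M[R]_(ng,n)) :
  (H *m (V + F))^T *m (V + F) - Lam =
  Lam *m (V^T *m F) + F^T *m V *m Lam + F^T *m (H *m F).
Proof.
rewrite trmx_mul hHt trD !mulmxDr !mulmxDl.
rewrite !mulmxA VtH -(mulmxA _ V^T V) hV mulmx1 -(mulmxA F^T H V) hHV mulmxA.
apply/eqP; rewrite -subr_eq0 !opprD !addrA.
cancel_pos (diag_mx dl). cancel_pos (diag_mx dl *m V^T *m F). cancel_pos (F^T *m V *m diag_mx dl).
by rewrite addNr add0r subrr.
Qed.


Lemma T_bound (F : 'M[R]_(ng,n)) :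
  fnorm ((H *m (V + F))^T *m (V + F) - Lam) <= 2 * h * fnorm F + h * fnorm F ^+ 2.
Proof.
rewrite T_eq.
have f0 := fnorm_ge0 F.
have h1 : fnorm (Lam *m (V^T *m F)) <= h * fnorm F.
  apply: le_trans (fnorm_diagl _ h0 hd) _; by rewrite ler_wpM2l // fnorm_isoVt.
have h2 : fnorm (F^T *m V *m Lam) <= h * fnorm F.
  apply: le_trans (fnorm_diagr _ h0 hd) _; by rewrite ler_wpM2l // -(fnorm_tr F) fnorm_isoVr.
have h3 : fnorm (F^T *m (H *m F)) <= fnorm F * (h * fnorm F).
  apply: le_trans (fnormM _ _) _; by rewrite fnorm_tr ler_wpM2l.
apply: le_trans (fnormD _ _) _; apply: le_trans (lerD (fnormD _ _) (lexx _)) _.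
nra.
Qed.

Lemma A_eq (F W : 'M[R]_(ng,n)) (S T : 'M[R]_n) :
  W = V + F -> W^T *m W = 1%:M + S -> (H *m W)^T *m W = Lam + T ->
  Aop H W W = H *m F - F *m Lam + V *m (Lam *m S - T) + H *m F *m S - F *m T.
Proof.
move=> eW e1 e2.
rewrite /Aop e1 e2 mulmxDr mulmx1 mulmxDr eW.
rewrite mulmxDr hHV !mulmxDl !mulmxDr !mulmxN !mulmxA.
apply/eqP; rewrite -subr_eq0 !opprD !opprK !addrA.
cancel_pos (V *m Lam). cancel_pos (H *m F). cancel_pos (V *m Lam *m S).
cancel_pos (H *m F *m S). cancel_neg (F *m Lam). cancel_neg (V *m T).
by rewrite subrr add0r addNr.
Qed.

Lemma LST_eq (F : 'M[R]_(ng,n)) :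
  Lam *m ((V + F)^T *m (V + F) - 1%:M) - ((H *m (V + F))^T *m (V + F) - Lam) =
  Lam *m (F^T *m V) + Lam *m (F^T *m F) - F^T *m V *m Lam - F^T *m (H *m F).
Proof.
rewrite S_eq T_eq !mulmxDr.
apply/eqP; rewrite -subr_eq0 !opprD !opprK !addrA.
cancel_pos (Lam *m (V^T *m F)).
cancel_pos (Lam *m (F^T *m V)). cancel_pos (Lam *m (F^T *m F)). cancel_neg (F^T *m V *m Lam). by rewrite addNr.
Qed.


Lemma A_bound (F : 'M[R]_(ng,n)) :
  fnorm (Aop H (V + F) (V + F)) <=
    h * (4 * fnorm F + 6 * fnorm F ^+ 2 + 2 * fnorm F ^+ 3).
Proof.
have f0 : 0 <= fnorm F := fnorm_ge0 F.
set S := (V + F)^T *m (V + F) - 1%:M.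
set T := (H *m (V + F))^T *m (V + F) - Lam.
rewrite (@A_eq F (V + F) S T) //; last 2 first.
- by rewrite /S subrKC.
- by rewrite /T subrKC.
have b1 : fnorm (H *m F) <= h * fnorm F := hH F.
have b2 : fnorm (F *m Lam) <= h * fnorm F := fnorm_diagr _ h0 hd.
have b3 : fnorm (V *m (Lam *m S - T)) <= 2 * h * fnorm F + 2 * h * fnorm F ^+ 2.
  rewrite fnorm_isoV // /S /T LST_eq.
  have c1 : fnorm (Lam *m (F^T *m V)) <= h * fnorm F.
    apply: le_trans (fnorm_diagl _ h0 hd) _; by rewrite ler_wpM2l // -(fnorm_tr F) fnorm_isoVr.
  have c2 : fnorm (Lam *m (F^T *m F)) <= h * (fnorm F * fnorm F).
    apply: le_trans (fnorm_diagl _ h0 hd) _; rewrite ler_wpM2l // -{1}(fnorm_tr F); exact: fnormM.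
  have c3 : fnorm (F^T *m V *m Lam) <= h * fnorm F.
    apply: le_trans (fnorm_diagr _ h0 hd) _; by rewrite ler_wpM2l // -(fnorm_tr F) fnorm_isoVr.
  have c4 : fnorm (F^T *m (H *m F)) <= fnorm F * (h * fnorm F).
    apply: le_trans (fnormM _ _) _; by rewrite fnorm_tr ler_wpM2l.
  apply: le_trans (fnormB _ _) _; apply: le_trans (lerD (fnormB _ _) (lexx _)) _.
  apply: le_trans (lerD (lerD (fnormD _ _) (lexx _)) (lexx _)) _.
  nra.
have b4 : fnorm (H *m F *m S) <= (h * fnorm F) * (2 * fnorm F + fnorm F ^+ 2).
  apply: le_trans (fnormM _ _) _; apply: ler_pM => //; first exact: fnorm_ge0.
  exact: fnorm_ge0.
  exact: S_bound.
have b5 : fnorm (F *m T) <= fnorm F * (2 * h * fnorm F + h * fnorm F ^+ 2).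
  apply: le_trans (fnormM _ _) _; apply: ler_wpM2l => //; exact: T_bound.
apply: le_trans (fnormB _ _) _; apply: le_trans (lerD (fnormD _ _) (lexx _)) _.
apply: le_trans (lerD (lerD (fnormD _ _) (lexx _)) (lexx _)) _.
apply: le_trans (lerD (lerD (lerD (fnormB _ _) (lexx _)) (lexx _)) (lexx _)) _.
nra.
Qed.


Lemma GtG (U G : 'M[R]_(ng,n)) (s : R) :
  G - U = - (s *: Aop H ((2%:R)^-1 *: (G + U)) ((2%:R)^-1 *: (G + U))) ->
  G^T *m G = U^T *m U.
Proof.
set W := (2%:R)^-1 *: (G + U); set A := Aop H W W => eD.
have two0 : (2%:R : R) != 0 by rewrite pnatr_eq0.
have eGU : G + U = 2%:R *: W by rewrite /W scalerA divff // scale1r.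
have key : 2%:R *: (G^T *m G - U^T *m U) =
    (G - U)^T *m (G + U) + (G + U)^T *m (G - U).
  rewrite trB trD !mulmxDl !mulmxDr !mulNmx !mulmxN ?mulmxDr scaler_nat mulr2n.
  apply/eqP; rewrite -subr_eq0 !opprD !opprK !addrA.
  cancel_pos (G^T *m G). cancel_pos (G^T *m G).
  cancel_neg (G^T *m G). cancel_neg (U^T *m U). cancel_neg (U^T *m U).
  cancel_neg (G^T *m U). cancel_neg (U^T *m G).
  cancel_pos (U^T *m U). by cancel_pos (U^T *m G).
have eA : (W^T *m A)^T = - (W^T *m A).
  set B := (H *m W)^T *m W; set C := W^T *m W.
  have eB : W^T *m (H *m W) = B by rewrite /B trmx_mul hHt mulmxA.
  have BT : B^T = B by rewrite /B !trmx_mul !trmxK hHt mulmxA.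
  have CT : C^T = C by rewrite /C trmx_mul trmxK.
  have -> : W^T *m A = B *m C - C *m B.
    by rewrite /A /Aop mulmxBr /B /C !trmx_mul hHt !mulmxA.
  by rewrite trB (trmx_mul B C) (trmx_mul C B) BT CT opprB.
have : 2%:R *: (G^T *m G - U^T *m U) = 0.
  have eA' : A^T *m W = - (W^T *m A) by rewrite -eA trmx_mul trmxK.
  rewrite key eGU eD trN trZ trZ mulNmx mulmxN -!scalemxAl -[A^T *m (2%:R *: W)]scalemxAr -[W^T *m (s *: A)]scalemxAr eA'.
  by rewrite !scalerN opprK !scalerA mulrC subrr.
move/eqP; rewrite scaler_eq0 (negbTE two0) /= subr_eq0 => /eqP //.
Qed.


Lemma main_est (U G : 'M[R]_(ng,n)) (s : R) : 0 <= s ->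
  G - U = - (s *: Aop H ((2%:R)^-1 *: (G + U)) ((2%:R)^-1 *: (G + U))) ->
  fnorm (G - s *: ((H *m G) *m (1%:M - G^T *m G)) - V) <=
   fnorm (U - V) + s * h * (fnorm ((2%:R)^-1 *: (G + U) - V) *
       (4 + 6 * fnorm ((2%:R)^-1 *: (G + U) - V) + 2 * fnorm ((2%:R)^-1 *: (G + U) - V) ^+ 2)
     + (2 * fnorm (U - V) + fnorm (U - V) ^+ 2) * (1 + fnorm (G - V))).
Proof.
move=> s0 eD; rewrite (GtG eD).
move: eD; set W := (2%:R)^-1 *: (G + U) => eD.
set f := fnorm (W - V); set d := fnorm (U - V); set g := fnorm (G - V).
have f0 : 0 <= f := fnorm_ge0 _.
have d0 : 0 <= d := fnorm_ge0 _.
have g0 : 0 <= g := fnorm_ge0 _.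
have bA : fnorm (G - U) <= s * (h * (4 * f + 6 * f ^+ 2 + 2 * f ^+ 3)).
  rewrite eD fnormN fnormZ ger0_norm // ler_wpM2l //.
  have := A_bound (W - V); rewrite subrKC //.
have eM : 1%:M - U^T *m U = - ((V + (U - V))^T *m (V + (U - V)) - 1%:M).
  by rewrite subrKC opprB.
have bM : fnorm (1%:M - U^T *m U) <= 2 * d + d ^+ 2 by rewrite eM fnormN S_bound.
have eHG : H *m G = V *m Lam + H *m (G - V).
  by rewrite -hHV -mulmxDr subrKC.
have bX : fnorm (H *m G *m (1%:M - U^T *m U)) <= h * (2 * d + d ^+ 2) * (1 + g).
  rewrite eHG mulmxDl -mulmxA.
  apply: le_trans (fnormD _ _) _.
  rewrite fnorm_isoV //.
  have b1 : fnorm (Lam *m (1%:M - U^T *m U)) <= h * (2 * d + d ^+ 2).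
    apply: le_trans (fnorm_diagl _ h0 hd) _; by rewrite ler_wpM2l.
  have b2 : fnorm (H *m (G - V) *m (1%:M - U^T *m U)) <= (h * g) * (2 * d + d ^+ 2).
    apply: le_trans (fnormM _ _) _.
    apply: ler_pM; [exact: fnorm_ge0 | exact: fnorm_ge0 | exact: hH | exact: bM].
  nra.
have -> : G - s *: (H *m G *m (1%:M - U^T *m U)) - V =
   (U - V) + (G - U) - s *: (H *m G *m (1%:M - U^T *m U)).
  by rewrite (addrC (U - V)) addrA subrK addrAC.
apply: le_trans (fnormB _ _) _; apply: le_trans (lerD (fnormD _ _) (lexx _)) _.
rewrite fnormZ ger0_norm //.
have : s * fnorm (H *m G *m (1%:M - U^T *m U)) <= s * (h * (2 * d + d ^+ 2) * (1 + g)).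
  by rewrite ler_wpM2l.
have -> : d + s * h * (f * (4 + 6 * f + 2 * f ^+ 2) + (2 * d + d ^+ 2) * (1 + g)) = d + s * (h * (4 * f + 6 * f ^+ 2 + 2 * f ^+ 3)) + s * (h * (2 * d + d ^+ 2) * (1 + g)) by ring.
move=> hX; exact: lerD (lerD (lexx _) bA) hX.
Qed.

End Core.

Section Spec.
Variable R : realType.
Local Open Scope classical_set_scope.

Lemma n2_eq0 m k (X : 'M[R]_(m,k)) : n2 X = 0 -> X = 0.
Proof.
move=> h; apply/matrixP => i j; rewrite mxE.
move/eqP: h; rewrite psumr_eq0 => [/allP H|i' _]; last by apply: sumr_ge0 => *; exact: sqr_ge0.
have := H i (mem_index_enum _); rewrite psumr_eq0 => [/allP H2|j' _]; last exact: sqr_ge0.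
by have := H2 j (mem_index_enum _); rewrite sqrf_eq0 => /eqP.
Qed.

Lemma n2M m k p (X : 'M[R]_(m,k)) (Y : 'M[R]_(k,p)) : n2 (X *m Y) <= n2 X * n2 Y.
Proof.
rewrite -!fnorm_sq -exprMn; have := fnormM X Y; have := fnorm_ge0 (X *m Y).
move=> a b; rewrite ler_sqr // ?nnegrE ?mulr_ge0 ?fnorm_ge0 //.
Qed.

Lemma eig_le k m (U : 'M[R]_(m,k)) a : eigenvalue (U^T *m U) a -> a <= n2 U.
Proof.
move/eigenvalueP => [v hv vn0].
have e : a * n2 v^T = n2 (U *m v^T).
  rewrite -!tr_n2 trmxK trmx_mul trmxK mulmxA -(mulmxA v) hv -scalemxAl.
  by rewrite linearZ.
have pos : 0 < n2 v^T.
  rewrite lt_def n2_ge0 andbT; apply/eqP => h0.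
  by move/eqP: vn0; apply; rewrite -(trmxK v) (n2_eq0 h0) linear0.
have := n2M U v^T; rewrite -e => h1.
by rewrite -(ler_pM2r pos).
Qed.

Lemma lmax_le k m (U : 'M[R]_(m,k)) : lambda_max (U^T *m U) <= n2 U.
Proof.
rewrite /lambda_max; have [ne|e0] := pselect ([set a : R | eigenvalue (U^T *m U) a] !=set0).
  by apply: ge_sup => // a; exact: eig_le.
rewrite sup_out ?n2_ge0 // => -[].
by move=> /e0.
Qed.

Lemma lmax_ge k m (U : 'M[R]_(m,k)) a : eigenvalue (U^T *m U) a -> a <= lambda_max (U^T *m U).
Proof.
move=> ha; apply: sup_upper_bound => //; split; first by exists a.
by exists (n2 U) => b; exact: eig_le.
Qed.

Lemma sigma_le k m (U : 'M[R]_(m,k)) : sigma_max U <= fnorm U.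
Proof. by rewrite /sigma_max fnormE ler_wsqrtr // lmax_le. Qed.

End Spec.

Section Alpha.
Variable R : realType.
Local Open Scope classical_set_scope.

Lemma alpha_has_sup ng n (V : 'M[R]_(ng,n)) (r : R) : 0 <= r ->
  has_sup [set sigma_max U | U in [set U : 'M[R]_(ng,n) | fnorm (U - V) <= r]].
Proof.
move=> r0; split.
  by exists (sigma_max V); exists V => //=; rewrite subrr fnormE /n2 big1 ?sqrtr0 // => i _; rewrite big1 // => j _; rewrite mxE expr0n.
exists (r + fnorm V) => _ [U /= hU <-].
apply: le_trans (sigma_le U) _.
have -> : U = (U - V) + V by rewrite subrK.
by apply: le_trans (fnormD _ _) _; rewrite lerD2r.
Qed.

Lemma alpha_ge ng n (V : 'M[R]_(ng,n)) (r : R) : (0 < n)%N -> V^T *m V = 1%:M -> 0 <= r ->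
  1 + r <= sup [set sigma_max U | U in [set U : 'M[R]_(ng,n) | fnorm (U - V) <= r]].
Proof.
move=> hn hV r0.
set i0 : 'I_n := Ordinal hn.
set E : 'M[R]_n := delta_mx i0 i0.
have EE : E *m E = E by rewrite /E mul_delta_mx.
have ET : E^T = E by rewrite /E trmx_delta.
have nE : fnorm E = 1.
  rewrite /fnorm ET EE /mxtrace (bigD1 i0) //= big1 ?addr0.
    by rewrite mxE !eqxx sqrtr1.
  by move=> i hi; rewrite mxE (negbTE hi) andbF.
set U0 := V *m (1%:M + r *: E).
have hU0 : fnorm (U0 - V) <= r.
  rewrite /U0 mulmxDr mulmx1 addrC addKr fnorm_isoV // fnormZ ger0_norm // nE mulr1 //.
have eU0 : U0^T *m U0 = 1%:M + (2 * r + r ^+ 2) *: E.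
  rewrite /U0 trmx_mul mulmxA -(mulmxA _ V^T) hV mulmx1 trD trZ trmx1 ET.
  rewrite mulmxDl mul1mx mulmxDr mulmx1 -scalemxAl -scalemxAr EE scalerA -scalerDl -addrA -scalerDl.
  by congr (_ + _ *: _); ring.
have eig : eigenvalue (U0^T *m U0) ((1 + r) ^+ 2).
  apply/eigenvalueP; exists (delta_mx 0 i0).
    rewrite eU0 mulmxDr mulmx1 -scalemxAr mul_delta_mx.
    by rewrite -{1}(scale1r (delta_mx 0 i0)) -scalerDl; congr (_ *: _); ring.
  apply/eqP => /matrixP /(_ 0 i0); rewrite !mxE !eqxx /=.
  by move/eqP; rewrite oner_eq0.
apply: le_trans (_ : sigma_max U0 <= _).
  rewrite /sigma_max -(@ger0_norm _ (1 + r)) ?addr_ge0 // -sqrtr_sqr.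
  by rewrite ler_wsqrtr // lmax_ge.
apply: sup_upper_bound; first exact: alpha_has_sup.
by exists U0.
Qed.

End Alpha.

Section Dist.
Variable R : realType.
Local Open Scope classical_set_scope.

Lemma dist_has_inf ng n (U V : 'M[R]_(ng,n)) :
  has_inf [set fnorm (U *m Q - V) | Q in [set Q : 'M[R]_n | orthogonal_mx Q]].
Proof.
split.
  exists (fnorm (U *m 1%:M - V)); exists 1%:M => //.
  by rewrite /= /orthogonal_mx trmx1 mulmx1.
by exists 0 => _ [Q _ <-]; exact: fnorm_ge0.
Qed.

Lemma dist_le ng n (U V : 'M[R]_(ng,n)) Q : orthogonal_mx Q -> dist_orb U V <= fnorm (U *m Q - V).
Proof.
move=> hQ; apply: ge_inf; first by case: (dist_has_inf U V).
by exists Q.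
Qed.

Lemma dist_adh ng n (U V : 'M[R]_(ng,n)) eps : 0 < eps ->
  exists Q, orthogonal_mx Q /\ fnorm (U *m Q - V) < dist_orb U V + eps.
Proof.
move=> e0; have [x [Q hQ <-] hx] := inf_adherent e0 (dist_has_inf U V).
by exists Q.
Qed.

Lemma lam_sq (lam : nat -> R) ng :
  (forall i j : nat, (i <= j)%N -> (j < ng)%N -> lam i <= lam j) ->
  forall i, (i < ng)%N -> lam i ^+ 2 <= (Num.max `|lam 0%N| `|lam ng.-1|) ^+ 2.
Proof.
move=> hm i hi.
have a : lam 0%N <= lam i by apply: hm.
have b : lam i <= lam ng.-1 by apply: hm => //; [rewrite -ltnS prednK // (leq_ltn_trans _ hi) | rewrite prednK // (leq_ltn_trans _ hi)].
have c : `|lam i| <= Num.max `|lam 0%N| `|lam ng.-1|.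
  rewrite le_max; have [hi0|hi0] := lerP 0 (lam i).
    by rewrite ger0_norm // (le_trans b (ler_norm _)) orbT.
  by rewrite ltr0_norm // (le_trans (_ : _ <= - lam 0%N)) ?lerN2 // -normrN ler_norm.
rewrite -real_normK ?num_real // ler_sqr ?nnegrE //.
by apply: le_trans c.
Qed.

End Dist.

Lemma eq_leR (R : realType) (x y : R) : x = y -> x <= y.
Proof. by move->. Qed.

Unset Implicit Arguments.

Theorem lemma4p5 (R : realType) (ng n : nat)
  (H : 'M[R]_ng) (lam : nat -> R) (Vs : 'M[R]_(ng, n))
  (eta_a eta_b delta_s : R)
  (ghat g : 'M[R]_(ng, n) -> R -> 'M[R]_(ng, n))
  (eta1 eta2 delta_b : R) :
  (* setting *)
  (0 < n)%N -> (n < ng)%N ->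
  H^T = H ->
  (forall i j : nat, (i <= j)%N -> (j < ng)%N -> lam i <= lam j) ->
  (exists P : 'M[R]_ng, P^T *m P = 1%:M /\
     H *m P = P *m diag_mx (\row_(i < ng) lam i)) ->
  lam 0%N < 0 ->
  lam n.-1 < lam n ->
  Vs^T *m Vs = 1%:M ->
  H *m Vs = Vs *m diag_mx (\row_(i < n) lam i) ->
  (* constants and the maps ghat, g *)
  0 < eta_a -> 0 < eta_b -> 0 < delta_s ->
  (forall U s, fnorm (U - Vs) <= eta_a -> 0 <= s <= delta_s ->
     fnorm (ghat U s - Vs) <= eta_b /\
     ghat U s - U = - (s *: Aop H ((2%:R)^-1 *: (ghat U s + U))
                                 ((2%:R)^-1 *: (ghat U s + U)))) ->
  (forall U s W, fnorm (U - Vs) <= eta_a -> 0 <= s <= delta_s ->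
     fnorm (W - Vs) <= eta_b ->
     W - U = - (s *: Aop H ((2%:R)^-1 *: (W + U)) ((2%:R)^-1 *: (W + U))) ->
     W = ghat U s) ->
  (forall U s, fnorm (U - Vs) <= eta_a -> 0 <= s <= delta_s ->
     g U s = ghat U s - s *: ((H *m ghat U s) *m (1%:M - (ghat U s)^T *m ghat U s))) ->
  (forall U s (Q : 'M[R]_n), dist_orb U Vs <= eta_a -> 0 <= s <= delta_s ->
     orthogonal_mx Q -> g (U *m Q) s = g U s *m Q) ->
  (forall U s, dist_orb U Vs <= eta_a -> 0 <= s <= delta_s ->
     dist_orb (g U s) Vs <= eta_b) ->
  (* the lemma *)
  let r := Num.max eta_a eta_b in
  let alpha := sup [set sigma_max U | U in [set U : 'M[R]_(ng, n) | fnorm (U - Vs) <= r]] in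
  let L := 6%:R * alpha ^+ 2 * Num.max `|lam 0%N| `|lam ng.-1| in
  0 < eta1 -> eta1 < Num.min 1 (Num.min eta_a eta_b) ->
  0 < eta2 -> eta2 < eta1 ->
  0 < delta_b ->
  delta_b <= Num.min ((eta1 - eta2) /
                       (L * Num.max eta_a eta_b + `|lam 0%N| * alpha * (alpha + 1) * eta2))
                     delta_s ->
  forall U s, dist_orb U Vs <= eta2 -> 0 <= s <= delta_b ->
    dist_orb (g U s) Vs <= eta1.

Proof.
move=> hn hng hHt hmono [P [hP hHP]] hl0 _ hVs hHVs ha hb hds hghat _ hg hgQ _.
move=> r alpha L he1 he1' he2 he21 hdb hdb2 U s hU /andP [s0 hsb].
set h := Num.max `|lam 0%N| `|lam ng.-1|.
have hl0h : `|lam 0%N| <= h by rewrite le_max lexx.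
have hpos : 0 < h by apply: lt_le_trans hl0h; rewrite normr_gt0 ltr0_neq0.
have h0 : 0 <= h := ltW hpos.
have hd_ng : forall i : 'I_ng, (\row_(i < ng) lam i) 0 i ^+ 2 <= h ^+ 2.
  by move=> i; rewrite mxE; apply: lam_sq.
have hd_n : forall i : 'I_n, (\row_(i < n) lam i) 0 i ^+ 2 <= h ^+ 2.
  by move=> i; rewrite mxE; apply: lam_sq => //; apply: ltn_trans hng.
have hH : forall p (X : 'M[R]_(ng,p)), fnorm (H *m X) <= h * fnorm X.
  by move=> p X; apply: (fnorm_H X h0 hP hHP hd_ng).
move: hdb2; rewrite le_min => /andP [hdb1 hdbs].
move: he1'; rewrite !lt_min => /andP [e1lt1 /andP [e1a e1b]].
have rA : eta_a <= r by rewrite /r le_max lexx.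
have rB : eta_b <= r by rewrite /r le_max lexx orbT.
have r0 : 0 <= r by apply: le_trans (ltW ha) rA.
have halpha : 1 + r <= alpha := alpha_ge hn hVs r0.
have al0 : 0 <= alpha by apply: le_trans halpha; rewrite addr_ge0.
set Den := L * Num.max eta_a eta_b + `|lam 0%N| * alpha * (alpha + 1) * eta2.
have LrE : L * Num.max eta_a eta_b = L * r by [].
have r0' : 0 < r := lt_le_trans ha rA.
have alpos : 0 < alpha by apply: lt_le_trans halpha; lra.
have Lr0 : 0 < L * r by rewrite /L !mulr_gt0 // ?exprn_gt0 // ltr0n.
have t0 : 0 <= `|lam 0%N| * alpha * (alpha + 1) * eta2.
  by rewrite !mulr_ge0 ?normr_ge0 ?addr_ge0 // ltW.
have Den0 : 0 < Den by rewrite /Den LrE; lra.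
have sDen : s * Den <= eta1 - eta2.
  apply: le_trans (_ : delta_b * Den <= _); first by rewrite ler_wpM2r // ltW.
  by rewrite -ler_pdivlMr.
have hs : 0 <= s <= delta_s by rewrite s0 (le_trans hsb hdbs).
apply/ler_addgt0Pr => eps eps0.
set e' := Num.min eps (eta_a - eta2).
have e'0 : 0 < e' by rewrite lt_min eps0 subr_gt0 (lt_trans he21 e1a).
have [Q [hQ hUQ]] := dist_adh U Vs e'0.
set U' := U *m Q.
have dU : fnorm (U' - Vs) < eta2 + e' by apply: lt_le_trans hUQ _; rewrite lerD2r.
have dUa : fnorm (U' - Vs) <= eta_a.
  have : e' <= eta_a - eta2 by rewrite /e' ge_min lexx orbT.
  move: dU; lra.
have hUa : dist_orb U Vs <= eta_a by apply: le_trans hU _; apply: ltW; apply: lt_trans he21 e1a.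
apply: le_trans (dist_le (g U s) Vs hQ) _.
rewrite -hgQ // hg //.
have [hG eqG] := hghat U' s dUa hs.
have := main_est hVs hHVs hHt h0 hH hd_n s0 eqG.
set G := ghat U' s.
set f := fnorm ((2%:R)^-1 *: (G + U') - Vs).
set d := fnorm (U' - Vs).
set g' := fnorm (G - Vs).
move=> hest; apply: le_trans hest _.
have f0 : 0 <= f by apply: fnorm_ge0.
have d0 : 0 <= d by apply: fnorm_ge0.
have g0 : 0 <= g' by apply: fnorm_ge0.
have dr : d <= r := le_trans dUa rA.
have gr : g' <= r := le_trans hG rB.
have fr : f <= r.
  rewrite /f.
  have -> : (2%:R)^-1 *: (G + U') - Vs = (2%:R)^-1 *: ((G - Vs) + (U' - Vs)).
    by apply/matrixP => i j; rewrite !mxE; field.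
  apply: le_trans (_ : (2%:R)^-1 * (g' + d) <= _).
    rewrite fnormZ ger0_norm ?invr_ge0 ?ler0n // ler_wpM2l ?invr_ge0 ?ler0n //; exact: fnormD.
  rewrite ler_pdivrMl ?ltr0n //; lra.
have poly : f * (4 + 6 * f + 2 * f ^+ 2) + (2 * d + d ^+ 2) * (1 + g')
      <= 6 * r + 9 * r ^+ 2 + 3 * r ^+ 3.
  have p1 : f * (4 + 6 * f + 2 * f ^+ 2) <= r * (4 + 6 * r + 2 * r ^+ 2).
    apply: ler_pM => //; first by rewrite !addr_ge0 // mulr_ge0 // sqr_ge0.
    apply: lerD; first (apply: lerD => //; by rewrite ler_wpM2l).
    by rewrite ler_wpM2l // ler_sqr ?nnegrE.
  have p2 : (2 * d + d ^+ 2) * (1 + g') <= (2 * r + r ^+ 2) * (1 + r).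
    apply: ler_pM => //; first by rewrite addr_ge0 ?mulr_ge0 ?sqr_ge0.
      by rewrite addr_ge0.
    by apply: lerD; [rewrite ler_wpM2l | rewrite ler_sqr ?nnegrE].
    by rewrite lerD2l.
  apply: le_trans (lerD p1 p2) _; apply: eq_leR; ring.
have LL : 6 * r + 9 * r ^+ 2 + 3 * r ^+ 3 <= 6 * alpha ^+ 2 * r.
  have a2 : (1 + r) ^+ 2 <= alpha ^+ 2 by rewrite ler_sqr ?nnegrE ?addr_ge0.
  apply: le_trans (_ : 6 * (1 + r) ^+ 2 * r <= _); last by rewrite ler_wpM2r // ler_wpM2l.
  nra.
have key : s * h * (f * (4 + 6 * f + 2 * f ^+ 2) + (2 * d + d ^+ 2) * (1 + g')) <= s * Den.
  rewrite -mulrA ler_wpM2l //.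
  apply: le_trans (_ : h * (6 * alpha ^+ 2 * r) <= _).
    by rewrite ler_wpM2l // (le_trans poly LL).
  rewrite /Den LrE /L.
  have : 0 <= `|lam 0%N| * alpha * (alpha + 1) * eta2 by rewrite !mulr_ge0 ?normr_ge0 ?addr_ge0 // ltW.
  move=> t; apply: le_trans (_ : 6%:R * alpha ^+ 2 * h * r <= _); last by rewrite lerDl.
  by apply: eq_leR; rewrite /h; ring.
have : e' <= eps by rewrite /e' ge_min lexx.
move: dU => dU.
move=> hee; have k3 : d < eta2 + eps by apply: lt_le_trans dU _; rewrite lerD2l.
apply: le_trans (lerD (lexx d) key) _. move: sDen k3. generalize (s * Den) => Y. clear. lra.
Qed.
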